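(* A nanoword over $\alpha$ of length $\le4$ is homotopically skew-symmetric if and only if it is contractible. A nanoword of length $\le4$ is homotopically symmetric if and only if it is contractible or symmetric.
   Context: Fix a set $\alpha$ with an involution $\tau$. An $\alpha$-alphabet is a set $\mathcal A$ with a map $A\mapsto|A|\in\alpha$. A nanoword over $\alpha$ is a pair $(\mathcal A,w)$ with $\mathcal A$ a finite $\alpha$-alphabet and $w$ a word in which each letter of $\mathcal A$ occurs exactly twice; its length is the length of $w$. Nanowords $(\mathcal A_1,w_1),(\mathcal A_2,w_2)$ are isomorphic if a bijection $f:\mathcal A_1\to\mathcal A_2$ with $|f(A)|=|A|$ carries $w_1$ letterwise to $w_2$. Homotopy moves ($x,y,z,t$ words in the remaining letters): (1) $(\mathcal A,xAAy)\mapsto(\mathcal A\setminus\{A\},xy)$; (2) $(\mathcal A,xAByBAz)\mapsto(\mathcal A\setminus\{A,B\},xyz)$ if $|B|=\tau(|A|)$; (3) $(\mathcal A,xAByACzBCt)\mapsto(\mathcal A,xBAyCAzCBt)$ if $A,B,C$ distinct with $|A|=|B|=|C|$. Homotopy ($\simeq$) is generated by isomorphisms, these moves and inverses; contractible means homotopic to the empty nanoword. The opposite of $(\mathcal A,w)$ is $w^-=(\mathcal A,\text{$w$ read backwards})$; the inverse is $\overline w=(\overline{\mathcal A},w)$, where $\overline{\mathcal A}$ is the set $\mathcal A$ with projection $A\mapsto\tau(|A|)$. $w$ is symmetric if it is isomorphic to $w^-$, homotopically symmetric if $w\simeq w^-$, and homotopically skew-symmetric if $w\simeq\overline w^-$.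 *)

(* Defs.v *)
From Stdlib Require Import Relations.Relation_Operators.
From mathcomp Require Import all_boot.
Set Implicit Arguments. Unset Strict Implicit. Unset Printing Implicit Defensive.

(* A nanoword is a word [nw_word] in which each
   occurring letter occurs exactly twice, together with a projection
   [nw_proj] to alpha, defined (= Some _) on every letter of the word; the
   alphabet of the nanoword is the set of letters occurring in the word.
   Values of [nw_proj] outside the alphabet are irrelevant (all notions below
   only look at letters of the word). *)
Record nanoword (alpha : Type) := Nanoword {
  nw_word : seq nat;
  nw_proj : nat -> option alpha;
  nw_valid : all (fun a => (count_mem a nw_word == 2) && isSome (nw_proj a)) nw_word
}.

Section Nanowords.
Variables (alpha : Type) (tau : alpha -> alpha).

Definition nw_length (w : nanoword alpha) : nat := size (nw_word w).

Definition nw_iso (w1 w2 : nanoword alpha) : Prop :=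
  exists f : nat -> nat,
    {in nw_word w1 &, injective f} /\
    map f (nw_word w1) = nw_word w2 /\
    {in nw_word w1, forall a, nw_proj w2 (f a) = nw_proj w1 a}.

Definition same_proj (w1 w2 : nanoword alpha) : Prop :=
  {in nw_word w2, forall a, nw_proj w2 a = nw_proj w1 a}.

Definition move1 (w1 w2 : nanoword alpha) : Prop :=
  exists (A : nat) (x y : seq nat),
    nw_word w1 = x ++ [:: A; A] ++ y /\ nw_word w2 = x ++ y /\ same_proj w1 w2.

Definition move2 (w1 w2 : nanoword alpha) : Prop :=
  exists (A B : nat) (x y z : seq nat),
    nw_word w1 = x ++ [:: A; B] ++ y ++ [:: B; A] ++ z /\
    A != B /\
    nw_proj w1 B = omap tau (nw_proj w1 A) /\
    nw_word w2 = x ++ y ++ z /\ same_proj w1 w2.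

Definition move3 (w1 w2 : nanoword alpha) : Prop :=
  exists (A B C : nat) (x y z t : seq nat),
    nw_word w1 = x ++ [:: A; B] ++ y ++ [:: A; C] ++ z ++ [:: B; C] ++ t /\
    [&& A != B, A != C & B != C] /\
    nw_proj w1 A = nw_proj w1 B /\ nw_proj w1 B = nw_proj w1 C /\
    nw_word w2 = x ++ [:: B; A] ++ y ++ [:: C; A] ++ z ++ [:: C; B] ++ t /\
    same_proj w1 w2.

Definition nw_step (w1 w2 : nanoword alpha) : Prop :=
  nw_iso w1 w2 \/ move1 w1 w2 \/ move2 w1 w2 \/ move3 w1 w2.

Definition homotopic (w1 w2 : nanoword alpha) : Prop :=
  clos_refl_sym_trans (nanoword alpha) nw_step w1 w2.

Lemma empty_nw_valid : all (fun a => (count_mem a (@nil nat) == 2) &&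
                                     isSome ((fun _ => @None alpha) a)) (@nil nat).
Proof. by []. Qed.
Definition empty_nw : nanoword alpha := Nanoword empty_nw_valid.

Definition contractible (w : nanoword alpha) : Prop := homotopic w empty_nw.

Lemma opp_valid (w : nanoword alpha) :
  all (fun a => (count_mem a (rev (nw_word w)) == 2) && isSome (nw_proj w a))
      (rev (nw_word w)).
Proof.
case: w => s p /= H; rewrite all_rev; apply/allP => a Ha.
by move/allP: H => /(_ a Ha); rewrite count_rev.
Qed.
Definition nw_opp (w : nanoword alpha) : nanoword alpha := Nanoword (opp_valid w).

Lemma inv_valid (w : nanoword alpha) :
  all (fun a => (count_mem a (nw_word w) == 2) &&
                isSome ((fun b => omap tau (nw_proj w b)) a)) (nw_word w).
Proof.
case: w => s p /= H; apply/allP => a Ha.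
by move/allP: H => /(_ a Ha); case: (p a).
Qed.
Definition nw_inv (w : nanoword alpha) : nanoword alpha := Nanoword (inv_valid w).

Definition nw_symmetric (w : nanoword alpha) : Prop := nw_iso w (nw_opp w).
Definition homotopically_symmetric (w : nanoword alpha) : Prop :=
  homotopic w (nw_opp w).
Definition homotopically_skew_symmetric (w : nanoword alpha) : Prop :=
  homotopic w (nw_opp (nw_inv w)).

End Nanowords.

(* Main.v *)
Require Import Defs.
From mathcomp Require Import all_boot all_order all_algebra.
From mathcomp Require Import zify ring.
From Stdlib Require Import Relations.Relation_Operators ClassicalEpsilon Classical.
Set Implicit Arguments. Unset Strict Implicit. Unset Printing Implicit Defensive.
Import GRing.Theory Num.Theory.

Definition key (s : seq nat) (A B : nat) : seq bool :=
  [seq x == A | x <- [seq x <- s | (x == A) || (x == B)]].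

Lemma key_cat (s1 s2 : seq nat) (A B : nat) : key (s1 ++ s2) A B = key s1 A B ++ key s2 A B.
Proof. by rewrite /key filter_cat map_cat. Qed.

Lemma key_notin_l (s : seq nat) (A E : nat) : A \notin s -> key s A E = nseq (count_mem E s) false.
Proof.
elim: s => //= x s IH; rewrite inE negb_or eq_sym => /andP[xA As].
rewrite /key /= (negbTE xA) /=.
have [exE|xE] := eqVneq x E; rewrite /= -/(key s A E) IH //.
by rewrite add0n (negbTE xA).

Qed.

Lemma key_notin_r (s : seq nat) (C A : nat) : A \notin s -> key s C A = nseq (count_mem C s) true.
Proof.
elim: s => //= x s IH; rewrite inE negb_or eq_sym => /andP[xA As].
rewrite /key /=; rewrite (negbTE xA) orbF.
have [->|xC] := eqVneq x C; rewrite /= -/(key s C A) IH //.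
by rewrite add0n eqxx.
Qed.

Lemma key_swap (u v D E : nat) :
  ~~ (((u == D) || (u == E)) && ((v == D) || (v == E))) ->
  key [:: u; v] D E = key [:: v; u] D E.
Proof.
rewrite /key /=.
by case: ((u == D) || (u == E)); case: ((v == D) || (v == E)).
Qed.

Definition epsl (l : seq bool) : int :=
  if l == [:: true; false; true; false] then 1%R
  else if l == [:: false; true; false; true] then (-1)%R else 0%R.

Definition eps s A B := epsl (key s A B).

Lemma epsl_ff l1 l2 : epsl (l1 ++ false :: false :: l2) = 0%R.
Proof.
rewrite /epsl; case: l1 => [|[] [|[] [|[] [|[] l1]]]] /=.
all: try done.
all: case: l2 => [|[] [|[] l2]] /=.
all: try done.
all: by case: l1.
Qed.
Lemma epsl_tt l1 l2 : epsl (l1 ++ true :: true :: l2) = 0%R.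
Proof.
rewrite /epsl; case: l1 => [|[] [|[] [|[] [|[] l1]]]] /=.
all: try done.
all: case: l2 => [|[] [|[] l2]] /=.
all: try done.
all: by case: l1.
Qed.

Lemma key2 (u v D E : nat) : key [:: u; v] D E =
  (if (u == D) || (u == E) then [:: u == D] else [::]) ++
  (if (v == D) || (v == E) then [:: v == D] else [::]).
Proof. by rewrite /key /=; case: ((u == D) || (u == E)); case: ((v == D) || (v == E)). Qed.

Lemma key_nil (r : seq nat) (X Y : nat) : X \notin r -> Y \notin r -> key r X Y = [::].
Proof.
move=> HX HY; rewrite key_notin_l //.
by have -> : count_mem Y r = 0%N by apply/count_memPn.
Qed.

Lemma swap_ok (u v D E : nat) : u != v -> (u == D) = false -> (v == D) = false ->
  ~~ (((u == D) || (u == E)) && ((v == D) || (v == E))).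
Proof.
move=> uv -> -> /=; apply/negP => /andP[/eqP uE /eqP vE].
by move: uv; rewrite uE vE eqxx.
Qed.

Lemma swap_ok2 (u v D E : nat) : u != v -> (u == D) = false -> (v == D) = false ->
  ~~ (((u == E) || (u == D)) && ((v == E) || (v == D))).
Proof. by move=> *; rewrite ![(_ == E) || _]orbC swap_ok. Qed.

Record prm (alpha : Type) := Prm {
  wt : int -> int; phi : option alpha -> int; chi : option alpha -> int;
  gg : int -> int; mm : int; nn : int }.

Section Inv.
Local Open Scope ring_scope.

Definition lk alpha (pr : prm alpha) (s : seq nat) (p : nat -> option alpha) (A : nat) : int :=
  \sum_(E <- s) wt pr (eps s A E) * phi pr (p E).
Definition Isum alpha (pr : prm alpha) s p : int :=
  \sum_(A <- s) chi pr (p A) * gg pr (lk pr s p A).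

Record good alpha (tau : alpha -> alpha) (pr : prm alpha) : Prop := Good {
  g_wt0 : wt pr 0 = 0;
  g_gg0 : gg pr 0 = 0;
  g_phi : forall o, exists k, phi pr (omap tau o) + phi pr o = k * mm pr;
  g_chi : forall o, exists k, chi pr (omap tau o) + chi pr o = k * nn pr;
  g_gg : forall v k, gg pr (v + k * (2 * mm pr)) = gg pr v;
  g_3 : forall o, (exists k, (wt pr 1 + wt pr (-1)) * phi pr o = k * mm pr) \/
                  (exists k, chi pr o = k * nn pr) }.

Definition cg (d x y : int) := exists k, x = y + k * d.

Lemma lk_proj alpha (pr : prm alpha) s p1 p2 A :
  {in s, p1 =1 p2} -> lk pr s p1 A = lk pr s p2 A.
Proof. by move=> H; apply: eq_big_seq => E HE; rewrite H. Qed.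

Lemma Isum_proj alpha (pr : prm alpha) s p1 p2 :
  {in s, p1 =1 p2} -> Isum pr s p1 = Isum pr s p2.
Proof.
by move=> H; apply: eq_big_seq => E HE; rewrite H // (lk_proj pr _ H).
Qed.

Lemma key_map (f : nat -> nat) (s : seq nat) (X E : nat) : {in s &, injective f} -> X \in s -> E \in s ->
  key (map f s) (f X) (f E) = key s X E.
Proof.
move=> inj HX HE; rewrite /key filter_map -map_comp.
have eqf := inj_in_eq inj.
rewrite (@eq_in_filter _ _ (fun x => (x == X) || (x == E))); last first.
  by move=> u Hu /=; rewrite !eqf.
apply/eq_in_map => u; rewrite mem_filter => /andP[_ Hu] /=; exact: eqf.
Qed.

Lemma Isum_map alpha (pr : prm alpha) f s p1 p2 :
  {in s &, injective f} -> {in s, forall a, p2 (f a) = p1 a} ->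
  Isum pr (map f s) p2 = Isum pr s p1.
Proof.
move=> inj Hp; rewrite /Isum big_map; apply: eq_big_seq => A HA.
rewrite Hp //; congr (_ * gg pr _).
rewrite /lk big_map; apply: eq_big_seq => E HE.
by rewrite /eps key_map // Hp.
Qed.

Lemma Isum_move1 alpha (pr : prm alpha) (x y : seq nat) (A : nat) p :
  wt pr 0 = 0 -> gg pr 0 = 0 -> A \notin x -> A \notin y ->
  Isum pr (x ++ [:: A; A] ++ y) p = Isum pr (x ++ y) p.
Proof.
move=> w0 g0 Ax Ay.
set s1 := x ++ _.
have Hn : A \notin x ++ y by rewrite mem_cat negb_or Ax.
have kA : forall D, D \in x ++ y -> (A == D) = false.
  by move=> D HD; apply/eqP => eAD; move: Hn; rewrite eAD HD.
have keq : forall D E, D \in x ++ y -> E \in x ++ y -> eps s1 D E = eps (x ++ y) D E.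
  move=> D E HD HE; rewrite /eps /s1 !key_cat.
  by rewrite {2}/key /= (kA D HD) (kA E HE) /=.
have e1 : forall D, D \in x ++ y -> eps s1 D A = 0.
  move=> D HD; rewrite /eps /s1 !key_cat (key_notin_r D Ax) (key_notin_r D Ay).
  rewrite /key /= eqxx orbT /=.
  have [eAD|nAD] := eqVneq A D; first by move: Hn; rewrite eAD HD.
  by rewrite epsl_ff.
have e2 : forall E, eps s1 A E = 0.
  move=> E; rewrite /eps /s1 !key_cat (key_notin_l E Ax) (key_notin_l E Ay).
  by rewrite /key /= !eqxx /= !eqxx epsl_tt.
have lkA : lk pr s1 p A = 0.
  by rewrite /lk big1_seq // => E _; rewrite e2 w0 mul0r.
have lkD : forall D, D \in x ++ y -> lk pr s1 p D = lk pr (x ++ y) p D.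
  move=> D HD; rewrite /lk /s1 !big_cat /= !big_cons big_nil !e1 // w0 mul0r !add0r.
  congr (_ + _); apply: eq_big_seq => E HE; rewrite keq //; rewrite mem_cat HE ?orbT //.
rewrite /Isum /s1 !big_cat /= !big_cons big_nil lkA g0 mulr0 !add0r.
congr (_ + _); apply: eq_big_seq => D HD; rewrite lkD //; rewrite mem_cat HD ?orbT //.
Qed.

End Inv.

Section Inv2.
Local Open Scope ring_scope.

Lemma notin_neq (s : seq nat) (A D : nat) : A \notin s -> D \in s -> (A == D) = false /\ (D == A) = false.
Proof.
move=> nA HD; have [eAD|nAD] := eqVneq A D; first by move: nA; rewrite eAD HD.
by [].

Qed.

Lemma Isum_move2 alpha tau (pr : prm alpha) (x y z : seq nat) (A B : nat) p :
  good tau pr -> A != B -> A \notin x -> A \notin y -> A \notin z ->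
  B \notin x -> B \notin y -> B \notin z -> p B = omap tau (p A) ->
  cg (2 * nn pr) (Isum pr (x ++ [:: A; B] ++ y ++ [:: B; A] ++ z) p)
                 (Isum pr (x ++ y ++ z) p).
Proof.
move=> [w0 g0 Hphi Hchi Hg H3] nAB Ax Ay Az Bx By Bz pB.
set s1 := x ++ _. set s2 := x ++ y ++ z.
have nA : A \notin s2 by rewrite /s2 !mem_cat !negb_or Ax Ay Az.
have nB : B \notin s2 by rewrite /s2 !mem_cat !negb_or Bx By Bz.
have AB : (A == B) = false by apply/negbTE.
have BA : (B == A) = false by rewrite eq_sym AB.
have cAx : count_mem A x = 0%N by apply/count_memPn.
have cAy : count_mem A y = 0%N by apply/count_memPn.
have cAz : count_mem A z = 0%N by apply/count_memPn.
have cBx : count_mem B x = 0%N by apply/count_memPn.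
have cBy : count_mem B y = 0%N by apply/count_memPn.
have cBz : count_mem B z = 0%N by apply/count_memPn.
have keq : forall D E, D \in s2 -> E \in s2 -> eps s1 D E = eps s2 D E.
  move=> D E HD HE.
  have [AD DA] := notin_neq nA HD; have [AE EA] := notin_neq nA HE.
  have [BD DB] := notin_neq nB HD; have [BE EB] := notin_neq nB HE.
  by rewrite /eps /s1 /s2 !key_cat !key2 AD AE BD BE /=.
have kDA : forall D, D \in s2 -> eps s1 D A = eps s1 D B.
  move=> D HD.
  have [AD DA] := notin_neq nA HD; have [BD DB] := notin_neq nB HD.
  rewrite /eps /s1 !key_cat !key2 (key_notin_r D Ax) (key_notin_r D Ay) (key_notin_r D Az).
  by rewrite (key_notin_r D Bx) (key_notin_r D By) (key_notin_r D Bz) AD BD AB BA !eqxx /=.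
have kAE : forall E, E \in s1 -> eps s1 A E = eps s1 B E.
  move=> E HE.
  have [EA|nEA] := eqVneq E A.
    rewrite EA /eps /s1 !key_cat !key2 (key_notin_l A Ax) (key_notin_l A Ay) (key_notin_l A Az).
    rewrite (key_notin_l A Bx) (key_notin_l A By) (key_notin_l A Bz) cAx cAy cAz AB BA !eqxx /=.
    by [].
  have [EB|nEB] := eqVneq E B.
    rewrite EB /eps /s1 !key_cat !key2 (key_notin_l B Ax) (key_notin_l B Ay) (key_notin_l B Az).
    rewrite (key_notin_l B Bx) (key_notin_l B By) (key_notin_l B Bz) cBx cBy cBz AB BA !eqxx /=.
    by [].
  have AE : (A == E) = false by rewrite eq_sym (negbTE nEA).
  have BE : (B == E) = false by rewrite eq_sym (negbTE nEB).
  rewrite /eps /s1 !key_cat !key2 (key_notin_l E Ax) (key_notin_l E Ay) (key_notin_l E Az).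
  by rewrite (key_notin_l E Bx) (key_notin_l E By) (key_notin_l E Bz) AE BE AB BA !eqxx /=.
have [kphi Hk] := Hphi (p A).
have lkD : forall D, D \in s2 ->
    lk pr s1 p D = lk pr s2 p D + (wt pr (eps s1 D A) * kphi) * (2 * mm pr).
  move=> D HD; rewrite /lk /s1 /s2 !big_cat !big_cons !big_nil -(kDA D HD).
  have ex : forall r, {subset r <= s2} ->
     \sum_(E <- r) wt pr (eps s1 D E) * phi pr (p E) =
     \sum_(E <- r) wt pr (eps s2 D E) * phi pr (p E).
    by move=> r Hr; apply: eq_big_seq => E HE; rewrite keq // Hr.
  rewrite -/s1 (ex x) ?(ex y) ?(ex z); first last.
  - by move=> u Hu; rewrite /s2 !mem_cat Hu.
  - by move=> u Hu; rewrite /s2 !mem_cat Hu !orbT.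
  - by move=> u Hu; rewrite /s2 !mem_cat Hu !orbT.
  rewrite -/s2 pB.
  have -> : phi pr (omap tau (p A)) = kphi * mm pr - phi pr (p A) by rewrite -Hk; ring.
  rewrite /=. ring.
have lkAB : lk pr s1 p A = lk pr s1 p B.
  by apply: eq_big_seq => E HE; rewrite kAE.
have [kchi Hk2] := Hchi (p A).
exists (kchi * gg pr (lk pr s1 p A)).
rewrite /Isum /s1 /s2 !big_cat !big_cons !big_nil -/s1 -lkAB.
have ex : forall r, {subset r <= s2} ->
   \sum_(D <- r) chi pr (p D) * gg pr (lk pr s1 p D) =
   \sum_(D <- r) chi pr (p D) * gg pr (lk pr s2 p D).
  by move=> r Hr; apply: eq_big_seq => D HD; rewrite lkD ?Hr // Hg.
rewrite (ex x) ?(ex y) ?(ex z); first last.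
- by move=> u Hu; rewrite /s2 !mem_cat Hu.
- by move=> u Hu; rewrite /s2 !mem_cat Hu !orbT.
- by move=> u Hu; rewrite /s2 !mem_cat Hu !orbT.
rewrite -/s2 pB.
have -> : chi pr (omap tau (p A)) = kchi * nn pr - chi pr (p A) by rewrite -Hk2; ring.
rewrite /=; ring.
Qed.

End Inv2.

Section Inv3.
Local Open Scope ring_scope.

Lemma Isum_move3 alpha tau (pr : prm alpha) (x y z t : seq nat) (A B C : nat) p :
  good tau pr -> A != B -> A != C -> B != C ->
  A \notin x -> A \notin y -> A \notin z -> A \notin t ->
  B \notin x -> B \notin y -> B \notin z -> B \notin t ->
  C \notin x -> C \notin y -> C \notin z -> C \notin t ->
  p A = p B -> p B = p C ->
  cg (2 * nn pr) (Isum pr (x ++ [:: A; B] ++ y ++ [:: A; C] ++ z ++ [:: B; C] ++ t) p)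
                 (Isum pr (x ++ [:: B; A] ++ y ++ [:: C; A] ++ z ++ [:: C; B] ++ t) p).
Proof.
move=> [w0 g0 Hphi Hchi Hg H3] nAB nAC nBC Ax Ay Az At Bx By Bz Bt Cx Cy Cz Ct pAB pBC.
set s1 := x ++ _. set s2 := x ++ _.
have AB : (A == B) = false by apply/negbTE.
have BA : (B == A) = false by rewrite eq_sym AB.
have AC : (A == C) = false by apply/negbTE.
have CA : (C == A) = false by rewrite eq_sym AC.
have BC : (B == C) = false by apply/negbTE.
have CB : (C == B) = false by rewrite eq_sym BC.
have inP : forall (r : seq nat) (D : nat), A \notin r -> B \notin r -> C \notin r -> D \in r ->
      [/\ (A == D) = false, (B == D) = false & (C == D) = false].
  move=> r D nA nB nC HD.
  by have [? _] := notin_neq nA HD; have [? _] := notin_neq nB HD; have [? _] := notin_neq nC HD.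
have K1 : forall D E : nat, (A == D) = false -> (B == D) = false -> (C == D) = false ->
    eps s1 D E = eps s2 D E /\ eps s1 E D = eps s2 E D.
  move=> D E AD BD CD; rewrite /eps /s1 /s2 !key_cat.
  rewrite (key_swap (swap_ok E nAB AD BD)) (key_swap (swap_ok E nAC AD CD)).
  rewrite (key_swap (swap_ok E nBC BD CD)).
  rewrite (key_swap (swap_ok2 E nAB AD BD)) (key_swap (swap_ok2 E nAC AD CD)).
  by rewrite (key_swap (swap_ok2 E nBC BD CD)).
have pieces : forall (r : seq nat) (X : nat), A \notin r -> B \notin r -> C \notin r ->
    \sum_(E <- r) wt pr (eps s1 X E) * phi pr (p E) =
    \sum_(E <- r) wt pr (eps s2 X E) * phi pr (p E).
  move=> r X nA nB nC; apply: eq_big_seq => E HE.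
  have [AE BE CE] := inP r E nA nB nC HE.
  by have [_ ->] := K1 E X AE BE CE.
have lkE : forall X : nat, lk pr s1 p X - lk pr s2 p X =
    (wt pr (eps s1 X A) + wt pr (eps s1 X B) + wt pr (eps s1 X A) + wt pr (eps s1 X C)
     + wt pr (eps s1 X B) + wt pr (eps s1 X C)) * phi pr (p A) -
    (wt pr (eps s2 X B) + wt pr (eps s2 X A) + wt pr (eps s2 X C) + wt pr (eps s2 X A)
     + wt pr (eps s2 X C) + wt pr (eps s2 X B)) * phi pr (p A).
  move=> X; rewrite /lk {1}/s1 {2}/s2 !big_cat !big_cons !big_nil /=.
  rewrite (pieces x X Ax Bx Cx) (pieces y X Ay By Cy) (pieces z X Az Bz Cz) (pieces t X At Bt Ct).
  rewrite -pAB -pBC -pAB; ring.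
have e1AA : eps s1 A A = 0 by rewrite /eps /s1 /s2 !key_cat !key2 !key_nil //;   rewrite ?eqxx ?AB ?BA ?AC ?CA ?BC ?CB /= ?eqxx ?AB ?BA ?AC ?CA ?BC ?CB /=.
have e1AB : eps s1 A B = 1 by rewrite /eps /s1 /s2 !key_cat !key2 !key_nil //;   rewrite ?eqxx ?AB ?BA ?AC ?CA ?BC ?CB /= ?eqxx ?AB ?BA ?AC ?CA ?BC ?CB /=.
have e1AC : eps s1 A C = 0 by rewrite /eps /s1 /s2 !key_cat !key2 !key_nil //;   rewrite ?eqxx ?AB ?BA ?AC ?CA ?BC ?CB /= ?eqxx ?AB ?BA ?AC ?CA ?BC ?CB /=.
have e1BA : eps s1 B A = -1 by rewrite /eps /s1 /s2 !key_cat !key2 !key_nil //;   rewrite ?eqxx ?AB ?BA ?AC ?CA ?BC ?CB /= ?eqxx ?AB ?BA ?AC ?CA ?BC ?CB /=.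
have e1BB : eps s1 B B = 0 by rewrite /eps /s1 /s2 !key_cat !key2 !key_nil //;   rewrite ?eqxx ?AB ?BA ?AC ?CA ?BC ?CB /= ?eqxx ?AB ?BA ?AC ?CA ?BC ?CB /=.
have e1BC : eps s1 B C = 1 by rewrite /eps /s1 /s2 !key_cat !key2 !key_nil //;   rewrite ?eqxx ?AB ?BA ?AC ?CA ?BC ?CB /= ?eqxx ?AB ?BA ?AC ?CA ?BC ?CB /=.
have e1CA : eps s1 C A = 0 by rewrite /eps /s1 /s2 !key_cat !key2 !key_nil //;   rewrite ?eqxx ?AB ?BA ?AC ?CA ?BC ?CB /= ?eqxx ?AB ?BA ?AC ?CA ?BC ?CB /=.
have e1CB : eps s1 C B = -1 by rewrite /eps /s1 /s2 !key_cat !key2 !key_nil //;   rewrite ?eqxx ?AB ?BA ?AC ?CA ?BC ?CB /= ?eqxx ?AB ?BA ?AC ?CA ?BC ?CB /=.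
have e1CC : eps s1 C C = 0 by rewrite /eps /s1 /s2 !key_cat !key2 !key_nil //;   rewrite ?eqxx ?AB ?BA ?AC ?CA ?BC ?CB /= ?eqxx ?AB ?BA ?AC ?CA ?BC ?CB /=.
have e2AA : eps s2 A A = 0 by rewrite /eps /s1 /s2 !key_cat !key2 !key_nil //;   rewrite ?eqxx ?AB ?BA ?AC ?CA ?BC ?CB /= ?eqxx ?AB ?BA ?AC ?CA ?BC ?CB /=.
have e2AB : eps s2 A B = 0 by rewrite /eps /s1 /s2 !key_cat !key2 !key_nil //;   rewrite ?eqxx ?AB ?BA ?AC ?CA ?BC ?CB /= ?eqxx ?AB ?BA ?AC ?CA ?BC ?CB /=.
have e2AC : eps s2 A C = 1 by rewrite /eps /s1 /s2 !key_cat !key2 !key_nil //;   rewrite ?eqxx ?AB ?BA ?AC ?CA ?BC ?CB /= ?eqxx ?AB ?BA ?AC ?CA ?BC ?CB /=.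
have e2BA : eps s2 B A = 0 by rewrite /eps /s1 /s2 !key_cat !key2 !key_nil //;   rewrite ?eqxx ?AB ?BA ?AC ?CA ?BC ?CB /= ?eqxx ?AB ?BA ?AC ?CA ?BC ?CB /=.
have e2BB : eps s2 B B = 0 by rewrite /eps /s1 /s2 !key_cat !key2 !key_nil //;   rewrite ?eqxx ?AB ?BA ?AC ?CA ?BC ?CB /= ?eqxx ?AB ?BA ?AC ?CA ?BC ?CB /=.
have e2BC : eps s2 B C = 0 by rewrite /eps /s1 /s2 !key_cat !key2 !key_nil //;   rewrite ?eqxx ?AB ?BA ?AC ?CA ?BC ?CB /= ?eqxx ?AB ?BA ?AC ?CA ?BC ?CB /=.
have e2CA : eps s2 C A = -1 by rewrite /eps /s1 /s2 !key_cat !key2 !key_nil //;   rewrite ?eqxx ?AB ?BA ?AC ?CA ?BC ?CB /= ?eqxx ?AB ?BA ?AC ?CA ?BC ?CB /=.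
have e2CB : eps s2 C B = 0 by rewrite /eps /s1 /s2 !key_cat !key2 !key_nil //;   rewrite ?eqxx ?AB ?BA ?AC ?CA ?BC ?CB /= ?eqxx ?AB ?BA ?AC ?CA ?BC ?CB /=.
have e2CC : eps s2 C C = 0 by rewrite /eps /s1 /s2 !key_cat !key2 !key_nil //;   rewrite ?eqxx ?AB ?BA ?AC ?CA ?BC ?CB /= ?eqxx ?AB ?BA ?AC ?CA ?BC ?CB /=.
have lkD : forall D : nat, (A == D) = false -> (B == D) = false -> (C == D) = false ->
    lk pr s1 p D = lk pr s2 p D.
  move=> D AD BD CD; apply/eqP; rewrite -subr_eq0; apply/eqP; rewrite lkE.
  have [-> _] := K1 D A AD BD CD; have [-> _] := K1 D B AD BD CD.
  have [-> _] := K1 D C AD BD CD; ring.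
have lkA : lk pr s1 p A = lk pr s2 p A.
  apply/eqP; rewrite -subr_eq0; apply/eqP; rewrite lkE ?e1AA ?e1AB ?e1AC ?e1BA ?e1BB ?e1BC ?e1CA ?e1CB ?e1CC ?e2AA ?e2AB ?e2AC ?e2BA ?e2BB ?e2BC ?e2CA ?e2CB ?e2CC w0; ring.
have lkC : lk pr s1 p C = lk pr s2 p C.
  apply/eqP; rewrite -subr_eq0; apply/eqP; rewrite lkE ?e1AA ?e1AB ?e1AC ?e1BA ?e1BB ?e1BC ?e1CA ?e1CB ?e1CC ?e2AA ?e2AB ?e2AC ?e2BA ?e2BB ?e2BC ?e2CA ?e2CB ?e2CC w0; ring.
have lkB : lk pr s1 p B = lk pr s2 p B + 2 * ((wt pr 1 + wt pr (-1)) * phi pr (p A)).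
  apply/eqP; rewrite -subr_eq0 opprD addrA; apply/eqP; rewrite lkE ?e1AA ?e1AB ?e1AC ?e1BA ?e1BB ?e1BC ?e1CA ?e1CB ?e1CC ?e2AA ?e2AB ?e2AC ?e2BA ?e2BB ?e2BC ?e2CA ?e2CB ?e2CC w0; ring.
have ex : forall (r : seq nat), A \notin r -> B \notin r -> C \notin r ->
   \sum_(D <- r) chi pr (p D) * gg pr (lk pr s1 p D) =
   \sum_(D <- r) chi pr (p D) * gg pr (lk pr s2 p D).
  move=> r nA nB nC; apply: eq_big_seq => D HD.
  by have [AD BD CD] := inP r D nA nB nC HD; rewrite lkD.
have Idiff : Isum pr s1 p = Isum pr s2 p +
    2 * chi pr (p A) * (gg pr (lk pr s1 p B) - gg pr (lk pr s2 p B)).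
  rewrite /Isum {1}/s1 {2}/s2 !big_cat !big_cons !big_nil /=.
  rewrite (ex x Ax Bx Cx) (ex y Ay By Cy) (ex z Az Bz Cz) (ex t At Bt Ct).
  rewrite -/s1 -/s2 lkA lkC -pAB -pBC -pAB; ring.
case: (H3 (p A)) => [[k Hk]|[k Hk]].
  exists 0; rewrite Idiff lkB Hk.
  have -> : 2 * (k * mm pr) = k * (2 * mm pr) by ring.
  rewrite Hg; ring.
exists (k * (gg pr (lk pr s1 p B) - gg pr (lk pr s2 p B))).
rewrite Idiff Hk; ring.
Qed.
End Inv3.

Lemma cnt2 alpha (w : nanoword alpha) (a : nat) :
  a \in nw_word w -> count_mem a (nw_word w) = 2.
Proof. by move: (nw_valid w) => /allP H Ha; case/andP: (H a Ha) => /eqP. Qed.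

Lemma notin0 (a : nat) (s : seq nat) : count_mem a s = 0 -> a \notin s.
Proof. by move/count_memPn. Qed.

Ltac cnt_solve := apply: notin0;
  repeat match goal with H : _ = 2%N |- _ => revert H end;
  repeat (let c := fresh "c" in set c := count _ _); intros; lia.

Section Inv4.
Local Open Scope ring_scope.

Definition Inv alpha (pr : prm alpha) (w : nanoword alpha) :=
  Isum pr (nw_word w) (nw_proj w).

Lemma cg_refl d x : cg d x x.
Proof. by exists 0; rewrite mul0r addr0. Qed.
Lemma cg_sym d x y : cg d x y -> cg d y x.
Proof. by case=> k ->; exists (- k); ring. Qed.
Lemma cg_trans d x y z : cg d x y -> cg d y z -> cg d x z.
Proof. by case=> k -> [l ->]; exists (k + l); ring. Qed.

Lemma step_inv alpha tau (pr : prm alpha) (w1 w2 : nanoword alpha) :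
  good tau pr -> nw_step tau w1 w2 -> cg (2 * nn pr) (Inv pr w1) (Inv pr w2).
Proof.
move=> G; case: (G) => w0 g0 _ _ _ _.
case=> [Hi|[H1|[H2|H3]]].
- case: Hi => f [inj [Hm Hp]].
  rewrite /Inv -Hm (Isum_map pr inj Hp); exact: cg_refl.
- case: H1 => A [x [y [E1 [E2 Hs]]]].
  rewrite /Inv (Isum_proj pr Hs) E1 E2.
  have := @cnt2 _ w1 A; rewrite E1 !mem_cat !inE eqxx !orbT => /(_ isT).
  rewrite !count_cat /= eqxx /= => H.
  rewrite Isum_move1 //; first exact: cg_refl.
  + by cnt_solve.
  + by cnt_solve.
- case: H2 => A [B [x [y [z [E1 [nAB [pB [E2 Hs]]]]]]]].
  rewrite /Inv (Isum_proj pr Hs) E1 E2.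
  have BA : (B == A) = false by rewrite eq_sym; apply/negbTE.
  have AB : (A == B) = false by apply/negbTE.
  have := @cnt2 _ w1 A; rewrite E1 !mem_cat !inE eqxx !orbT => /(_ isT).
  rewrite !count_cat /= eqxx BA /= => HA.
  have := @cnt2 _ w1 B; rewrite E1 !mem_cat !inE eqxx !orbT => /(_ isT).
  rewrite !count_cat /= eqxx AB /= => HB.
  apply: (Isum_move2 G) => //; try by cnt_solve.
- case: H3 => A [B [C [x [y [z [t [E1 [nABC [pAB [pBC [E2 Hs]]]]]]]]]]].
  rewrite /Inv (Isum_proj pr Hs) E1 E2.
  case/and3P: nABC => nAB nAC nBC.
  have AB : (A == B) = false by apply/negbTE.
  have BA : (B == A) = false by rewrite eq_sym AB.
  have AC : (A == C) = false by apply/negbTE.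
  have CA : (C == A) = false by rewrite eq_sym AC.
  have BC : (B == C) = false by apply/negbTE.
  have CB : (C == B) = false by rewrite eq_sym BC.
  have := @cnt2 _ w1 A; rewrite E1 !mem_cat !inE eqxx !orbT => /(_ isT).
  rewrite !count_cat /= eqxx BA CA /= => HA.
  have := @cnt2 _ w1 B; rewrite E1 !mem_cat !inE eqxx !orbT => /(_ isT).
  rewrite !count_cat /= eqxx AB CB /= => HB.
  have := @cnt2 _ w1 C; rewrite E1 !mem_cat !inE eqxx !orbT => /(_ isT).
  rewrite !count_cat /= eqxx AC BC /= => HC.

  apply: (Isum_move3 G) => //; try by cnt_solve.
Qed.

Lemma hom_inv alpha tau (pr : prm alpha) (w1 w2 : nanoword alpha) :
  good tau pr -> homotopic tau w1 w2 -> cg (2 * nn pr) (Inv pr w1) (Inv pr w2).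
Proof.
move=> G; elim=> {w1 w2} [w1 w2 H|w|w1 w2 _ IH|w1 w2 w3 _ IH1 _ IH2].
- exact: step_inv G H.
- exact: cg_refl.
- exact: cg_sym.
- exact: cg_trans IH1 IH2.
Qed.

End Inv4.

Section Inv5.
Local Open Scope ring_scope.

Definition ind (P : Prop) : int := if excluded_middle_informative P then 1 else 0.
Lemma ind_T (P : Prop) : P -> ind P = 1.
Proof. by rewrite /ind; case: excluded_middle_informative. Qed.
Lemma ind_F (P : Prop) : ~ P -> ind P = 0.
Proof. by rewrite /ind; case: excluded_middle_informative. Qed.
Lemma ind_iff (P Q : Prop) : (P <-> Q) -> ind P = ind Q.
Proof.
move=> [PQ QP]; case: (classic P) => HP; first by rewrite !ind_T //; exact: PQ.
by rewrite !ind_F // => /QP.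
Qed.

Lemma Isum_abab alpha (pr : prm alpha) (A B : nat) p : A != B -> wt pr 0 = 0 ->
  Isum pr [:: A; B; A; B] p =
  2 * chi pr (p A) * gg pr (2 * (wt pr 1 * phi pr (p B))) +
  2 * chi pr (p B) * gg pr (2 * (wt pr (-1) * phi pr (p A))).
Proof.
move=> nAB w0.
have AB : (A == B) = false by apply/negbTE.
have BA : (B == A) = false by rewrite eq_sym AB.
have eAA : eps [:: A; B; A; B] A A = 0 by rewrite /eps /key /= ?eqxx ?AB ?BA /= ?eqxx ?AB ?BA.
have eBB : eps [:: A; B; A; B] B B = 0 by rewrite /eps /key /= ?eqxx ?AB ?BA /= ?eqxx ?AB ?BA.
have eAB : eps [:: A; B; A; B] A B = 1 by rewrite /eps /key /= ?eqxx ?AB ?BA /= ?eqxx ?AB ?BA.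
have eBA : eps [:: A; B; A; B] B A = -1 by rewrite /eps /key /= ?eqxx ?AB ?BA /= ?eqxx ?AB ?BA.
have h1 : forall u : int, u + u = 2 * u by move=> u; ring.
rewrite /Isum /lk !big_cons !big_nil /= eAA eBB eAB eBA w0 !mul0r !add0r !addr0 !h1; ring.
Qed.

End Inv5.

Section Inst.
Local Open Scope ring_scope.

Definition fID alpha (tau : alpha -> alpha) (a : alpha) (o : option alpha) : int :=
  ind (o = Some a) - ind (o = Some (tau a)).

Definition prmID alpha (tau : alpha -> alpha) (a : alpha) : prm alpha :=
  Prm (fun v => v) (fID tau a) (fID tau a) (fun v => ind (v = 2)) 0 0.

Lemma fID_tau alpha (tau : alpha -> alpha) (Ht : involutive tau) a o :
  fID tau a (omap tau o) = - fID tau a o.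
Proof.
case: o => [x|]; last by rewrite /fID /= !ind_F //; ring.
rewrite /fID /=.
rewrite (@ind_iff (Some (tau x) = Some a) (Some x = Some (tau a))); last first.
  by split=> [[<-]|[->]]; rewrite Ht.
rewrite (@ind_iff (Some (tau x) = Some (tau a)) (Some x = Some a)); last first.
  by split=> [[/(inv_inj Ht) ->]|[->]].
ring.
Qed.

Lemma goodID alpha (tau : alpha -> alpha) (Ht : involutive tau) a : good tau (prmID tau a).
Proof.
split => //=.
- by rewrite ind_F.
- by move=> o; exists 0; rewrite fID_tau //; ring.
- by move=> o; exists 0; rewrite fID_tau //; ring.
- by move=> v k; rewrite !mulr0 addr0.
- by move=> o; left; exists 0; ring.
Qed.

Definition orb_ind alpha (tau : alpha -> alpha) (c : alpha) (o : option alpha) : int :=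
  ind (o = Some c \/ o = Some (tau c)).

Definition prmM alpha (tau : alpha -> alpha) (a b : alpha) : prm alpha :=
  Prm (fun v => ind (v = 1)) (orb_ind tau b) (orb_ind tau a)
      (fun v => ind (exists k : int, v = 2 + k * 4)) 2 2.

Lemma orb_tau alpha (tau : alpha -> alpha) (Ht : involutive tau) c o :
  orb_ind tau c (omap tau o) = orb_ind tau c o.
Proof.
case: o => [x|] //; rewrite /orb_ind /=; apply: ind_iff.
split=> [[[e]|[e]]|[[e]|[e]]].
- by right; rewrite -e Ht.
- by left; rewrite -(inv_inj Ht e).
- by right; rewrite e.
- by left; rewrite e Ht.
Qed.

Lemma goodM alpha (tau : alpha -> alpha) (Ht : involutive tau) a b :
  b <> a -> b <> tau a -> good tau (prmM tau a b).
Proof.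
move=> ba bta; split => /=.
- by rewrite ind_F.
- by rewrite ind_F // => -[k]; lia.
- by move=> o; exists (orb_ind tau b o); rewrite orb_tau //; ring.
- by move=> o; exists (orb_ind tau a o); rewrite orb_tau //; ring.
- move=> v k; apply: ind_iff; split=> -[l Hl].
    by exists (l - k); rewrite -[v](addrK (k * (2 * 2))) Hl; ring.
  by exists (l + k); rewrite Hl; ring.
- have wm1 : ind (-1 = 1 :> int) = 0 by rewrite ind_F //; lia.
  move=> o; rewrite (@ind_T (1 = 1 :> int)) // wm1.
  case: (classic (o = Some b \/ o = Some (tau b))) => Hb; last first.
    by left; exists 0; rewrite /orb_ind ind_F //; ring.
  right; exists 0; rewrite /orb_ind ind_F; first ring.
  case: Hb => -> [[e]|[e]].
  + by apply: ba.
  + by apply: bta.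
  + by apply: bta; rewrite -e Ht.
  + by apply: ba; apply: (inv_inj Ht).
Qed.

End Inst.

Section NH.
Local Open Scope ring_scope.

Lemma ind_eqb (v w : int) : ind (v = w) = if v == w then 1 else 0.
Proof. by case: eqP => H; [rewrite ind_T | rewrite ind_F]. Qed.

Lemma Inv_empty alpha (pr : prm alpha) : Inv pr (empty_nw alpha) = 0.
Proof. by rewrite /Inv /Isum big_nil. Qed.

Lemma nohom_ID alpha (tau : alpha -> alpha) (Ht : involutive tau) (w : nanoword alpha)
  (A B : nat) a :
  nw_word w = [:: A; B; A; B] -> A != B -> nw_proj w A = Some a -> nw_proj w B = Some a ->
  a <> tau a ->
  ~ contractible tau w /\ ~ homotopically_skew_symmetric tau w.
Proof.
move=> Ew nAB pA pB ata.
have G := goodID Ht a.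
have fa : fID tau a (Some a) = 1 by rewrite /fID ind_T // ind_F ?subr0 // => -[e].
have fta : fID tau a (Some (tau a)) = -1.
  by rewrite /fID (@ind_F (Some (tau a) = Some a)) ?ind_T ?sub0r // => -[e]; apply: ata.
have Iw : Inv (prmID tau a) w = 2.
  rewrite /Inv Ew Isum_abab //= pA pB fa !ind_eqb /=.
  by [].
have Ioi : Inv (prmID tau a) (nw_opp (nw_inv tau w)) = -2.
  rewrite /Inv /= Ew /= Isum_abab //=; last by rewrite eq_sym.
  rewrite pA pB /= fta !ind_eqb /=.
  by [].
split => H; have [k] := hom_inv G H; rewrite Iw ?Inv_empty ?Ioi /= => Hk; lia.
Qed.

Lemma nohom_M alpha (tau : alpha -> alpha) (Ht : involutive tau) (w : nanoword alpha)
  (A B : nat) a b :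
  nw_word w = [:: A; B; A; B] -> A != B -> nw_proj w A = Some a -> nw_proj w B = Some b ->
  b <> a -> b <> tau a ->
  [/\ ~ contractible tau w, ~ homotopically_skew_symmetric tau w &
      ~ homotopically_symmetric tau w].
Proof.
move=> Ew nAB pA pB ba bta.
have G := goodM Ht ba bta.
have chiA : orb_ind tau a (Some a) = 1 by rewrite /orb_ind ind_T //; left.
have chiTA : orb_ind tau a (Some (tau a)) = 1 by rewrite /orb_ind ind_T //; right.
have chiB : orb_ind tau a (Some b) = 0.
  by rewrite /orb_ind ind_F // => -[[e]|[e]]; [apply: ba | apply: bta].
have chiTB : orb_ind tau a (Some (tau b)) = 0.
  rewrite /orb_ind ind_F // => -[[e]|[e]].
    by apply: bta; rewrite -e Ht.
  by apply: ba; apply: (inv_inj Ht).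
have phiB : orb_ind tau b (Some b) = 1 by rewrite /orb_ind ind_T //; left.
have gg2 : ind (exists k : int, 2 * (1 * 1) = 2 + k * 4) = 1.
  by rewrite ind_T //; exists 0; ring.
have gg0 : forall x : int, ind (exists k : int, 2 * (0 * x) = 2 + k * 4) = 0.
  by move=> x; rewrite ind_F // => -[k]; rewrite mul0r mulr0; lia.
have Iw : Inv (prmM tau a b) w = 2.
  rewrite /Inv Ew Isum_abab //=; last by rewrite ind_F.
  rewrite pA pB !ind_eqb /= chiA chiB phiB gg2.
  ring.
have Io : Inv (prmM tau a b) (nw_opp w) = 0.
  rewrite /Inv /= Ew /= Isum_abab //=; last (by rewrite ind_F); last by rewrite eq_sym.
  rewrite pA pB !ind_eqb /= chiA chiB gg0; ring.
have Ioi : Inv (prmM tau a b) (nw_opp (nw_inv tau w)) = 0.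
  rewrite /Inv /= Ew /= Isum_abab //=; last (by rewrite ind_F); last by rewrite eq_sym.
  rewrite pA pB !ind_eqb /= chiTA chiTB gg0; ring.
split => H; have [k] := hom_inv G H; rewrite Iw ?Inv_empty ?Ioi ?Io /= => Hk; lia.
Qed.

End NH.

Lemma valid2 alpha (u : nanoword alpha) (B : nat) : B \in nw_word u ->
  all (fun a => (count_mem a [:: B; B] == 2) && isSome (nw_proj u a)) [:: B; B].
Proof.
move=> HB; move: (nw_valid u) => /allP /(_ B HB) /andP[_ S].
by rewrite /= eqxx /= S.
Qed.

Lemma contr_nil alpha (tau : alpha -> alpha) (u : nanoword alpha) :
  nw_word u = [::] -> contractible tau u.
Proof.
move=> Eu; apply: rst_step; left; exists id; rewrite Eu; split => //.
Qed.

Lemma contr_AA alpha (tau : alpha -> alpha) (u : nanoword alpha) (A : nat) :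
  nw_word u = [:: A; A] -> contractible tau u.
Proof.
move=> Eu; apply: rst_step; right; left; exists A, [::], [::]; rewrite Eu.
by do !split => //.
Qed.

Lemma contr_AABB alpha (tau : alpha -> alpha) (u : nanoword alpha) (A B : nat) :
  nw_word u = [:: A; A; B; B] -> contractible tau u.
Proof.
move=> Eu; have HB : B \in nw_word u by rewrite Eu !inE eqxx !orbT.
pose u' := Nanoword (valid2 HB).
apply: (rst_trans _ _ _ u'); last exact: (@contr_AA _ _ u' B).
apply: rst_step; right; left; exists A, [::], [:: B; B]; rewrite Eu.
by do !split => //.
Qed.

Lemma contr_ABBA alpha (tau : alpha -> alpha) (u : nanoword alpha) (A B : nat) :
  nw_word u = [:: A; B; B; A] -> contractible tau u.
Proof.
move=> Eu; have HA : A \in nw_word u by rewrite Eu !inE eqxx.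
pose u' := Nanoword (valid2 HA).
apply: (rst_trans _ _ _ u'); last exact: (@contr_AA _ _ u' A).
apply: rst_step; right; left; exists B, [:: A], [:: A]; rewrite Eu.
by do !split => //.
Qed.

Definition Pp alpha (tau : alpha -> alpha) (a : alpha) (n : nat) : option alpha :=
  if odd n then Some (tau a) else Some a.

Lemma contr_ABAB alpha (tau : alpha -> alpha) (Ht : involutive tau) (u : nanoword alpha)
  (A B : nat) a :
  nw_word u = [:: A; B; A; B] -> A != B -> nw_proj u A = Some a ->
  nw_proj u B = Some (tau a) -> contractible tau u.
Proof.
move=> Eu nAB pA pB.
pose P := Pp tau a.
pose N0 := @Nanoword alpha [:: 0; 1; 0; 1] P isT.
pose N1 := @Nanoword alpha [:: 2; 3; 0; 1; 3; 2; 0; 1] P isT.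
pose N2 := @Nanoword alpha [:: 2; 4; 5; 3; 0; 1; 3; 2; 0; 1; 5; 4] P isT.
pose N3 := @Nanoword alpha [:: 2; 4; 3; 5; 0; 3; 1; 2; 0; 5; 1; 4] P isT.
pose N4 := @Nanoword alpha [:: 2; 4; 3; 3; 1; 2; 1; 4] P isT.
pose N5 := @Nanoword alpha [:: 2; 4; 1; 2; 1; 4] P isT.
pose N6 := @Nanoword alpha [:: 2; 2] P isT.
have BA : (B == A) = false by rewrite eq_sym; apply/negbTE.
have memAB : forall z, z \in nw_word u -> z = A \/ z = B.
  move=> z; rewrite Eu !inE.
  case: (eqVneq z A) => [->|zA]; first by left.
  by case: (eqVneq z B) => [->|zB]; [right | ].
have s0 : nw_step tau u N0.
  left; exists (fun n => if n == A then 0 else 1); split; last split.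
  - move=> x y /memAB [] -> /memAB [] ->; rewrite ?eqxx ?BA //.
  - by rewrite Eu /= eqxx BA.
  - by move=> x /memAB [] ->; rewrite ?eqxx ?BA /= /P /Pp /= ?pA ?pB.
have s1 : nw_step tau N1 N0.
  right; right; left; exists 2, 3, [::], [:: 0; 1], [:: 0; 1].
  by do !split => //.
have s2 : nw_step tau N2 N1.
  right; right; left; exists 4, 5, [:: 2], [:: 3; 0; 1; 3; 2; 0; 1], [::].
  by do !split => //.
have s3 : nw_step tau N3 N2.
  right; right; right; exists 3, 5, 1, [:: 2; 4], [:: 0], [:: 2; 0], [:: 4].
  by do !split => //.
have s4 : nw_step tau N3 N4.
  right; right; left; exists 5, 0, [:: 2; 4; 3], [:: 3; 1; 2], [:: 1; 4].
  by do !split => //=; rewrite /P /Pp /= Ht.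
have s5 : nw_step tau N4 N5.
  right; left; exists 3, [:: 2; 4], [:: 1; 2; 1; 4].
  by do !split => //.
have s6 : nw_step tau N5 N6.
  right; right; left; exists 4, 1, [:: 2], [:: 2], [::].
  by do !split => //.
have c6 : contractible tau N6 by apply: (@contr_AA _ _ N6 2).
apply: (rst_trans _ _ _ _ _ (rst_step _ _ _ _ s0)).
apply: (rst_trans _ _ _ _ _ (rst_sym _ _ _ _ (rst_step _ _ _ _ s1))).
apply: (rst_trans _ _ _ _ _ (rst_sym _ _ _ _ (rst_step _ _ _ _ s2))).
apply: (rst_trans _ _ _ _ _ (rst_sym _ _ _ _ (rst_step _ _ _ _ s3))).
apply: (rst_trans _ _ _ _ _ (rst_step _ _ _ _ s4)).
apply: (rst_trans _ _ _ _ _ (rst_step _ _ _ _ s5)).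
exact: (rst_trans _ _ _ _ _ (rst_step _ _ _ _ s6)).
Qed.

Lemma shape4 alpha (w : nanoword alpha) : nw_length w <= 4 ->
  nw_word w = [::] \/ (exists A, nw_word w = [:: A; A]) \/
  (exists A B, nw_word w = [:: A; A; B; B]) \/ (exists A B, nw_word w = [:: A; B; B; A]) \/
  (exists A B, A != B /\ nw_word w = [:: A; B; A; B]).
Proof.
case: w => s p H; rewrite /nw_length /= => Hs.
move: H Hs; case: s => [|x1 [|x2 [|x3 [|x4 [|x5 s]]]]] //= H _.
- by left.
- by move: H; rewrite eqxx.
- move: H; case: (eqVneq x1 x2) => [e12|n12] /=; rewrite ?eqxx //=.
  by move=> _; right; left; exists x1; rewrite e12.
- move: H; case: (eqVneq x1 x2) => [e12|n12]; case: (eqVneq x1 x3) => [e13|n13];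
    case: (eqVneq x2 x3) => [e23|n23]; rewrite /= ?eqxx ?andbF //=.
- move: H; case: (eqVneq x1 x2) => [e12|n12]; case: (eqVneq x1 x3) => [e13|n13];
    case: (eqVneq x1 x4) => [e14|n14]; case: (eqVneq x2 x3) => [e23|n23];
    case: (eqVneq x2 x4) => [e24|n24]; case: (eqVneq x3 x4) => [e34|n34];
    rewrite /= ?eqxx ?andbF //=.
  all: move=> _.
  all: first [ by right; right; left; exists x1, x3; rewrite e12 e34
             | by right; right; right; left; exists x1, x2; rewrite e14 e23
             | by right; right; right; right; exists x1, x2; split => //; rewrite e13 e24 ].
Qed.

Definition cshape alpha (tau : alpha -> alpha) (u : nanoword alpha) : Prop :=
  nw_word u = [::] \/ (exists A, nw_word u = [:: A; A]) \/
  (exists A B, nw_word u = [:: A; A; B; B]) \/ (exists A B, nw_word u = [:: A; B; B; A]) \/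
  (exists A B, A != B /\ nw_word u = [:: A; B; A; B] /\
               nw_proj u B = omap tau (nw_proj u A)).

Lemma proj_some alpha (u : nanoword alpha) (A : nat) :
  A \in nw_word u -> exists a, nw_proj u A = Some a.
Proof.
move=> HA; move: (nw_valid u) => /allP /(_ A HA) /andP[_].
by case: (nw_proj u A) => // a _; exists a.
Qed.

Lemma omap_inv alpha (tau : alpha -> alpha) (Ht : involutive tau) o :
  omap tau (omap tau o) = o.
Proof. by case: o => //= x; rewrite Ht. Qed.

Lemma cshape_contr alpha (tau : alpha -> alpha) (Ht : involutive tau) (u : nanoword alpha) :
  cshape tau u -> contractible tau u.
Proof.
case=> [E|[[A E]|[[A [B E]]|[[A [B E]]|[A [B [nAB [E pB]]]]]]]].
- exact: contr_nil.
- exact: contr_AA E.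
- exact: contr_AABB E.
- exact: contr_ABBA E.
- have [a pA] : exists a, nw_proj u A = Some a by apply: proj_some; rewrite E inE eqxx.
  by apply: (contr_ABAB Ht E nAB pA); rewrite pB pA.
Qed.

Lemma cshape_opp alpha (tau : alpha -> alpha) (Ht : involutive tau) (u : nanoword alpha) :
  cshape tau u -> cshape tau (nw_opp u).
Proof.
rewrite /cshape /=.
case=> [->|[[A ->]|[[A [B ->]]|[[A [B ->]]|[A [B [nAB [-> pB]]]]]]]].
- by left.
- by right; left; exists A.
- by right; right; left; exists B, A.
- by right; right; right; left; exists A, B.
- right; right; right; right; exists B, A; split; first by rewrite eq_sym.
  by split => //; rewrite pB omap_inv.
Qed.

Lemma cshape_inv alpha (tau : alpha -> alpha) (u : nanoword alpha) :
  cshape tau u -> cshape tau (nw_inv tau u).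
Proof.
rewrite /cshape /=.
case=> [->|[[A ->]|[[A [B ->]]|[[A [B ->]]|[A [B [nAB [-> pB]]]]]]]].
- by left.
- by right; left; exists A.
- by right; right; left; exists A, B.
- by right; right; right; left; exists A, B.
- right; right; right; right; exists A, B; split => //.
  by split => //; rewrite pB.
Qed.

Theorem corollary8p4 (alpha : Type) (tau : alpha -> alpha)
  (Htau : involutive tau) (w : nanoword alpha) (Hlen : nw_length w <= 4) :
  (homotopically_skew_symmetric tau w <-> contractible tau w) /\
  (homotopically_symmetric tau w <-> contractible tau w \/ nw_symmetric w).
Proof.
case: (classic (cshape tau w)) => Hc.
  have c1 := cshape_contr Htau Hc.
  have c2 := cshape_contr Htau (cshape_opp Htau Hc).
  have c3 := cshape_contr Htau (cshape_opp Htau (cshape_inv Hc)).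
  split; split => _.
  - exact: c1.
  - exact: (rst_trans _ _ _ _ _ c1 (rst_sym _ _ _ _ c3)).
  - by left.
  - exact: (rst_trans _ _ _ _ _ c1 (rst_sym _ _ _ _ c2)).
have [A [B [nAB E]]] : exists A B, A != B /\ nw_word w = [:: A; B; A; B].
  case: (shape4 Hlen) => [E|[[A E]|[[A [B E]]|[[A [B E]]|//]]]]; exfalso; apply: Hc.
  - by left.
  - by right; left; exists A.
  - by right; right; left; exists A, B.
  - by right; right; right; left; exists A, B.
have [a pA] : exists a, nw_proj w A = Some a by apply: proj_some; rewrite E inE eqxx.
have [b pB] : exists b, nw_proj w B = Some b by apply: proj_some; rewrite E !inE eqxx orbT.
have bta : b <> tau a.
  move=> e; apply: Hc; right; right; right; right; exists A, B.
  by rewrite pA pB e.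
case: (classic (b = a)) => ba.
  subst b.
  have ata : a <> tau a by [].
  have [nc ns] := nohom_ID Htau E nAB pA pB ata.
  have sym : nw_symmetric w.
    exists (fun n => if n == A then B else A).
    have BA : (B == A) = false by rewrite eq_sym; apply/negbTE.
    have memAB : forall z, z \in nw_word w -> z = A \/ z = B.
      move=> z; rewrite E !inE.
      case: (eqVneq z A) => [->|zA]; first by left.
      by case: (eqVneq z B) => [->|zB]; [right | ].
    split; last split.
    - by move=> x y /memAB [] -> /memAB [] ->; rewrite ?eqxx ?BA.
    - by rewrite /= E /= eqxx BA.
    - by move=> x /memAB [] ->; rewrite /= ?eqxx ?BA ?pA ?pB.
  split; split => H.
  - by exfalso; apply: ns.
  - by exfalso; apply: nc.
  - by right.
  - exact: (rst_step _ _ _ _ (or_introl sym)).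
have [nc ns nh] := nohom_M Htau E nAB pA pB ba bta.
split; split => H.
- by exfalso; apply: ns.
- by exfalso; apply: nc.
- by exfalso; apply: nh.
- case: H => // sym; exfalso; apply: nh.
  exact: (rst_step _ _ _ _ (or_introl sym)).
Qed.
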